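(* Let $X \subseteq \mathbb{P}^N$ be an irreducible, nondegenerate variety over an algebraically closed field of characteristic zero, with generic rank $g$ and maximal rank $m$. Then for $1 \leq k \leq m-g$, $\sigma_k(X) = kX \subset W_{m-k}$.
   Context: For a nondegenerate variety $X\subseteq\mathbb{P}^N$, the rank of a point $p$ is the least $r$ such that $p$ lies in the linear span of some $r$ distinct points of $X$; $W_k$ is the Zariski closure of the set of points of rank exactly $k$; $g$ is the rank of a general point and $m$ the maximum rank. The join $V_1+V_2$ of two varieties is the closure of the union of lines spanned by distinct points $p\in V_1$, $q\in V_2$; $kX=X+(k-1)X$ ($k$ copies), and the $k$-th secant variety $\sigma_k(X)$ is the closure of the set of points of rank at most $k$, which equals $kX$. *)

(* Defs.v *)
From HB Require Import structures.
From mathcomp Require Import all_boot all_order all_algebra.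
From mathcomp Require Import mpoly.
Set Implicit Arguments. Unset Strict Implicit. Unset Printing Implicit Defensive.
Import Order.TTheory GRing.Theory.
Local Open Scope ring_scope.

(* Points of P^N over F are represented by nonzero vectors of F^(N+1)
   (homogeneous coordinates); a subset of P^N is a predicate on vectors,
   only its nonzero (and, for all sets built below, scaling-invariant)
   members being meaningful. *)
Section Proj.
Variables (F : fieldType) (N : nat).

Definition vec := 'rV[F]_N.+1.
Definition pset := vec -> Prop.

Definition coords (v : vec) : 'I_N.+1 -> F := fun i => v ord0 i.

Definition homogeneous (f : {mpoly F[N.+1]}) : Prop := exists d : nat, f \is d.-homog.

Definition zclosed (C : pset) : Prop :=
  exists I : {mpoly F[N.+1]} -> Prop,
    (forall f, I f -> homogeneous f) /\
    forall v, C v <-> (v != 0 /\ forall f, I f -> f.@[coords v] = 0).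

Definition zclosure (S : pset) : pset :=
  fun v => forall C, zclosed C -> (forall u, S u -> C u) -> C v.

Definition irreducible_variety (X : pset) : Prop :=
  [/\ zclosed X, (exists x, X x) &
      forall C1 C2, zclosed C1 -> zclosed C2 ->
        (forall x, X x -> C1 x \/ C2 x) ->
        (forall x, X x -> C1 x) \/ (forall x, X x -> C2 x)].

Definition nondegenerate_var (X : pset) : Prop :=
  forall a : vec, a != 0 -> exists x, X x /\ \sum_i a ord0 i * x ord0 i != 0.

Definition proj_eq (u v : vec) : Prop := exists c : F, c != 0 /\ u = c *: v.

Definition rank_le (X : pset) (p : vec) (r : nat) : Prop :=
  exists xs : 'I_r -> vec,
    [/\ forall i, X (xs i),
        forall i j, i != j -> ~ proj_eq (xs i) (xs j) &
        exists c : 'I_r -> F, p = \sum_i c i *: xs i].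

Definition rank_eq (X : pset) (p : vec) (k : nat) : Prop :=
  rank_le X p k /\ forall r, (r < k)%N -> ~ rank_le X p r.

Definition W (X : pset) (k : nat) : pset :=
  zclosure (fun v => v != 0 /\ rank_eq X v k).

Definition secant (X : pset) (k : nat) : pset :=
  zclosure (fun v => v != 0 /\ exists r, (r <= k)%N /\ rank_eq X v r).

Definition join (V1 V2 : pset) : pset :=
  zclosure (fun v => v != 0 /\ exists p q, [/\ V1 p, V2 q, ~ proj_eq p q &
                      exists a b : F, v = a *: p + b *: q]).

(* kX = X + (k-1)X, with 1X = X (0X is the empty set, never used) *)
Fixpoint kjoin (X : pset) (k : nat) : pset :=
  match k with
  | 0 => fun _ => False
  | 1 => X
  | k'.+1 => join X (kjoin X k')
  end.

(* generic rank g : the rank of a general point, i.e. every point of a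
   nonempty Zariski open subset of P^N has rank g *)
Definition generic_rank (X : pset) (g : nat) : Prop :=
  exists C : pset, [/\ zclosed C, (exists v, v != 0 /\ ~ C v) &
    forall v, v != 0 -> ~ C v -> rank_eq X v g].

Definition max_rank (X : pset) (m : nat) : Prop :=
  (forall v, v != 0 -> exists r, (r <= m)%N /\ rank_eq X v r) /\
  (exists v, v != 0 /\ rank_eq X v m).

End Proj.

(* Main.v *)
Require Import Defs.
From HB Require Import structures.
From mathcomp Require Import all_boot all_order all_algebra.
From mathcomp Require Import mpoly.
From Stdlib Require Import Classical.
From mathcomp Require Import zify.
Set Implicit Arguments. Unset Strict Implicit. Unset Printing Implicit Defensive.
Import Order.TTheory GRing.Theory.
Local Open Scope ring_scope.

Section A.
Variable F : closedFieldType.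
Variable N : nat.
Implicit Types (u v w : vec F N) (f : {mpoly F[N.+1]}).

Lemma nonroot (P : {poly F}) : P != 0 -> exists t, P.[t] != 0.
Proof.
move=> P0.
have : size (P * 'X + 1) != 1%N.
  by rewrite -polyC1 size_MXaddC (negbTE P0) /= eqSS size_poly_eq0.
move/closed_rootP=> [t /rootP]; rewrite hornerD hornerMX hornerC => H.
exists t; apply/eqP=> Pt; move: H; rewrite Pt mul0r add0r => /eqP; by rewrite oner_eq0.
Qed.

Lemma polyfun f u w : exists P : {poly F}, forall t, f.@[coords (u + t *: w)] = P.[t].
Proof.
exists (\sum_(m <- msupp f) (f@_m)%:P * \prod_(i < N.+1) ((u ord0 i)%:P + (w ord0 i)%:P * 'X) ^+ m i).
move=> t; rewrite mevalE -horner_evalE rmorph_sum /=; apply: eq_bigr => m _.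
rewrite rmorphM rmorph_prod /= horner_evalE hornerC; congr (_ * _); apply: eq_bigr => i _.
rewrite rmorphXn /= horner_evalE hornerD hornerMX !hornerC /coords !mxE; congr (_ ^+ _).
by rewrite mulrC.
Qed.


Lemma homog_scale f d c v : f \is d.-homog -> f.@[coords (c *: v)] = c ^+ d * f.@[coords v].
Proof.
move=> hf; rewrite !mevalE mulr_sumr big_seq [RHS]big_seq; apply: eq_bigr => m mf.
rewrite mulrCA; congr (_ * _).
rewrite (eq_bigr (fun i => c ^+ m i * coords v i ^+ m i)); last by move=> i _; rewrite /coords mxE exprMn.
rewrite big_split /= prodrXr; congr (_ ^+ _ * _).
by rewrite -mdegE (dhomog_mf hf mf).
Qed.

End A.
Section C.
Variable F : fieldType.
Variable N : nat.
Variable X : pset F N.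
Implicit Types (u v w x : vec F N).

Definition rep v n := exists (xs : 'I_n -> vec F N) (c : 'I_n -> F),
  (forall i, X (xs i)) /\ v = \sum_i c i *: xs i.

Lemma proj_eq_sym u v : proj_eq u v -> proj_eq v u.
Proof.
case=> c [c0 ->]; exists c^-1; split; first by rewrite invr_eq0.
by rewrite scalerA mulVf // scale1r.
Qed.

Lemma rank_le_rep v r : rank_le X v r -> rep v r.
Proof. by case=> xs [Hx _ [c ->]]; exists xs, c. Qed.

Lemma rep0 : rep 0 0.
Proof. by exists (fun _ => 0), (fun _ => 0); split; [case | rewrite big_ord0]. Qed.

Lemma rep1 x c : X x -> rep (c *: x) 1.
Proof. by move=> Xx; exists (fun _ => x), (fun _ => c); split=> //; rewrite big_ord1. Qed.

Lemma rep_add v w n n' : rep v n -> rep w n' -> rep (v + w) (n + n').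
Proof.
case=> xs [c [Hx ->]]; case=> ys [d [Hy ->]].
exists (fun i => match split i with inl j => xs j | inr j => ys j end).
exists (fun i => match split i with inl j => c j | inr j => d j end).
split; first by move=> i; case: (split i).
rewrite big_split_ord /=; congr (_ + _); apply: eq_bigr => i _.
  by rewrite -/(unsplit (inl i)) unsplitK.
by rewrite -/(unsplit (inr i)) unsplitK.
Qed.

Lemma rep_scale v n c : rep v n -> rep (c *: v) n.
Proof.
case=> xs [d [Hx ->]]; exists xs, (fun i => c * d i); split=> //.
by rewrite scaler_sumr; apply: eq_bigr => i _; rewrite scalerA.
Qed.

Lemma merge v n : rep v n -> exists r, (r <= n)%N /\ rank_le X v r.
Proof.
elim: n v => [|n IH] v [xs [c [Hx ->]]].
  by exists 0%N; split=> //; exists xs; split; [|case|exists c].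
rewrite big_ord_recl.
have : rep (\sum_(i < n) c (lift ord0 i) *: xs (lift ord0 i)) n.
  by exists (fun i => xs (lift ord0 i)), (fun i => c (lift ord0 i)).
move=> /IH [r [rn [ys [Hy Hd [ds Hw]]]]].
rewrite Hw; set x0 := xs ord0; set c0 := c ord0.
case: (classic (exists j, proj_eq x0 (ys j))) => [[j [e [e0 ->]]]|Hn].
  exists r; split; first exact: leqW.
  exists ys; split=> //; exists (fun i => ds i + (if i == j then c0 * e else 0)).
  rewrite [RHS](eq_bigr (fun i => ds i *: ys i + (if i == j then c0 * e else 0) *: ys i)); last first.
    by move=> i _; rewrite scalerDl.
  rewrite big_split /= addrC scalerA; congr (_ + _).
  rewrite (bigD1 j) //= eqxx big1 ?addr0 // => i /negbTE ->; by rewrite scale0r.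
exists r.+1; split=> //.
exists (fun i => match unlift ord0 i with Some j => ys j | None => x0 end); split.
- by move=> i; case: (unlift ord0 i) => [j|]; [apply: Hy | apply: Hx].
- move=> i i'; case: (unliftP ord0 i) => [j ->|->]; case: (unliftP ord0 i') => [j' ->|->] //.
  + move=> ne; apply: Hd; apply: contraNneq ne => ->; done.
  + by rewrite ?liftK ?unlift_none => _ /proj_eq_sym He; apply: Hn; exists j.
  + by rewrite ?liftK ?unlift_none => _ He; apply: Hn; exists j'.
- exists (fun i => match unlift ord0 i with Some j => ds j | None => c0 end).
  rewrite big_ord_recl unlift_none; congr (_ + _); apply: eq_bigr => i _.
  by rewrite ?liftK.
Qed.

Lemma rank_eq_rep_le v r n : rank_eq X v r -> rep v n -> (r <= n)%N.
Proof.
case=> _ Hmin /merge [r' [r'n Hr']].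
case: (leqP r n) => // nr; exfalso; apply: (Hmin r') => //.
exact: leq_ltn_trans nr.
Qed.

End C.

Section B.
Variable F : closedFieldType.
Variable N : nat.
Implicit Types (u v w x z : vec F N) (S C D : pset F N).

Lemma zclosure_sub S u : S u -> zclosure S u.
Proof. by move=> Su C _ /(_ u Su). Qed.

Lemma closed_nz C v : zclosed C -> C v -> v != 0.
Proof. by case=> I [_ HI] /HI []. Qed.

Lemma zclosure_closed S : (forall u, S u -> u != 0) -> zclosed (zclosure S).
Proof.
move=> Snz.
exists (fun f => exists C I, [/\ (forall g, I g -> homogeneous g),
   (forall v, C v <-> (v != 0 /\ forall g, I g -> g.@[coords v] = 0)),
   (forall u, S u -> C u) & I f]).
split.
  by move=> f [C [I [HI _ _ If]]]; apply: HI.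
move=> v; split.
- move=> Hv; split.
    have : zclosed (fun v : vec F N => v != 0).
      by exists (fun _ => False); split=> // w; split=> [->|[]].
    by move/Hv; apply.
  move=> f [C [I [HIh HC SC If]]].
  have /HC [_ ->] // : C v by apply: Hv => //; exists I.
- move=> [vnz Hf] C [I [HIh HC]] SC; apply/HC; split=> // f If.
  by apply: Hf; exists C, I.
Qed.

Lemma nz_coord v : v != 0 -> exists i, v ord0 i != 0.
Proof.
move=> vnz; apply: NNPP => H; move/eqP: vnz; apply; apply/rowP => i.
rewrite mxE; apply: NNPP => Hi; apply: H; exists i; exact/eqP.
Qed.

Lemma not_closed_wit C (I : {mpoly F[N.+1]} -> Prop) v : (forall v, C v <-> (v != 0 /\ forall g, I g -> g.@[coords v] = 0)) ->
  v != 0 -> ~ C v -> exists f, I f /\ f.@[coords v] != 0.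
Proof.
move=> HC vnz nC; apply: NNPP => H; apply: nC; apply/HC; split=> // g Ig.
apply: NNPP => Hg; apply: H; exists g; split=> //; exact/eqP.
Qed.

Lemma evX i v : ('X_i : {mpoly F[N.+1]}).@[coords v] = v ord0 i.
Proof. by rewrite mevalXU. Qed.

Lemma poly_nz (P : {poly F}) t : P.[t] != 0 -> P != 0.
Proof. by apply: contraNneq => ->; rewrite horner0. Qed.

End B.

Section P2.
Variable F : closedFieldType.
Variable N : nat.
Variable X : pset F N.
Implicit Types (u v w x z : vec F N) (C D : pset F N).

Definition LB z b := forall n, rep X z n -> (b <= n)%N.

Lemma rank_LB z r : rank_eq X z r -> LB z r.
Proof. by move=> Hr n; apply: rank_eq_rep_le. Qed.

Lemma step_lb D j z : (forall v, v != 0 -> exists r, rank_eq X v r) ->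
  (forall v, v != 0 -> rank_eq X v j -> D v) ->
  LB z j -> z != 0 -> ~ D z -> LB z j.+1.
Proof.
move=> Hrk HD Hz znz nD; have [r Hr] := Hrk z znz.
have rj : (j <= r)%N by apply: Hz; apply: rank_le_rep; case: Hr.
have : r != j by apply/eqP => E; apply: nD; apply: HD => //; rewrite -E.
move=> rnj n /(rank_LB Hr) rn; lia.
Qed.

Lemma lb_add z b x t : X x -> LB z b.+1 -> LB (z + t *: x) b.
Proof.
move=> Xx Hz n Hn.
have : rep X z (n + 1) by rewrite -[z](addrK (t *: x)) -scaleNr; apply: rep_add => //; apply: rep1.
by move/Hz; rewrite addn1.
Qed.

Lemma walk C (IC : {mpoly F[N.+1]} -> Prop) fC D (ID : {mpoly F[N.+1]} -> Prop) g j
  (HC : forall v, C v <-> (v != 0 /\ forall f, IC f -> f.@[coords v] = 0))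
  (HfC : IC fC)
  (HDd : forall v, D v <-> (v != 0 /\ forall f, ID f -> f.@[coords v] = 0))
  (Hrk : forall v, v != 0 -> exists r, rank_eq X v r)
  (HD : forall v, v != 0 -> rank_eq X v j -> D v)
  (Hgen : forall v, v != 0 -> ~ C v -> rank_eq X v g)
  (gj : (g <= j)%N) n :
  forall (xs : 'I_n -> vec F N) z, (forall i, X (xs i)) -> LB z j.+1 -> z != 0 -> ~ D z ->
  (exists tau : 'I_n -> F, fC.@[coords (z + \sum_i tau i *: xs i)] != 0) -> False.
Proof.
elim: n => [|n IH] xs z Hx Hz znz nD [tau Htau].
  move: Htau; rewrite big_ord0 addr0 => Hf.
  have nC : ~ C z by move/HC => [_ /(_ _ HfC) /eqP]; rewrite (negbTE Hf).
  case: (Hgen _ znz nC) => Hle _; have := Hz _ (rank_le_rep Hle); lia.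
move: Htau; rewrite big_ord_recl => Htau.
set W := \sum_(i < n) tau (lift ord0 i) *: xs (lift ord0 i) in Htau.
have [fD [IfD HfD]] := not_closed_wit HDd znz nD.
have [i0 Hi0] := nz_coord znz.
have [P1 HP1] := polyfun fC (z + W) (xs ord0).
have [P2 HP2] := polyfun fD z (xs ord0).
have [P3 HP3] := polyfun ('X_i0) z (xs ord0).
have P1nz : P1 != 0 by apply: (poly_nz (t:=(tau ord0))); rewrite -HP1 addrAC -addrA.
have P2nz : P2 != 0 by apply: (poly_nz (t:=0)); rewrite -HP2 scale0r addr0.
have P3nz : P3 != 0 by apply: (poly_nz (t:=0)); rewrite -HP3 scale0r addr0 evX.
have : P1 * P2 * P3 != 0 by rewrite !mulf_neq0.
move/nonroot => [t].
rewrite !hornerM !mulf_eq0 !negb_or => /andP[/andP[H1 H2] H3].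
rewrite -HP1 -HP2 -HP3 evX in H1 H2 H3.
have z'nz : z + t *: xs ord0 != 0 by apply: contraNneq H3 => ->; rewrite mxE.
have nD' : ~ D (z + t *: xs ord0) by move/HDd => [_ /(_ _ IfD) /eqP]; rewrite (negbTE H2).
apply: (IH (fun i => xs (lift ord0 i)) (z + t *: xs ord0)) => //.
- apply: step_lb Hrk HD _ z'nz nD' => //; exact: lb_add.
- by exists (fun i => tau (lift ord0 i)); rewrite addrAC.
Qed.


Lemma small_in_D C (IC : {mpoly F[N.+1]} -> Prop) fC D (ID : {mpoly F[N.+1]} -> Prop) g j m p v0 y r
  (HC : forall v, C v <-> (v != 0 /\ forall f, IC f -> f.@[coords v] = 0))
  (HfC : IC fC)
  (HDd : forall v, D v <-> (v != 0 /\ forall f, ID f -> f.@[coords v] = 0))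
  (Hrk : forall v, v != 0 -> exists r, rank_eq X v r)
  (HD : forall v, v != 0 -> rank_eq X v j -> D v)
  (Hgen : forall v, v != 0 -> ~ C v -> rank_eq X v g)
  (gj : (g <= j)%N) (Hp : rank_eq X p m) (Hv0 : fC.@[coords v0] != 0) (Rv0 : rep X v0 g)
  (ynz : y != 0) (Ry : rep X y r) (rjm : (r + j <= m)%N) : D y.
Proof.
apply: NNPP => nD.
have [xs [c [Hx E]]] : rep X ((-1) *: y + v0) (r + g) by apply: rep_add => //; apply: rep_scale.
have yW : y + \sum_i c i *: xs i = v0 by rewrite -E addrA scaleN1r subrr add0r.
have [fD [IfD HfD]] := not_closed_wit HDd ynz nD.
have [i0 Hi0] := nz_coord ynz.
have [P1 HP1] := polyfun fC (y + \sum_i c i *: xs i) p.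
have [P2 HP2] := polyfun fD y p.
have [P3 HP3] := polyfun ('X_i0) y p.
have P1nz : P1 != 0 by apply: (poly_nz (t:=0)); rewrite -HP1 scale0r addr0 yW.
have P2nz : P2 != 0 by apply: (poly_nz (t:=0)); rewrite -HP2 scale0r addr0.
have P3nz : P3 != 0 by apply: (poly_nz (t:=0)); rewrite -HP3 scale0r addr0 evX.
have : 'X * P1 * P2 * P3 != 0 by rewrite !mulf_neq0 ?polyX_eq0.
move/nonroot => [t].
rewrite !hornerM hornerX !mulf_eq0 !negb_or => /andP[/andP[/andP[H0 H1] H2] H3].
rewrite -HP1 -HP2 -HP3 evX in H1 H2 H3.
have z'nz : y + t *: p != 0 by apply: contraNneq H3 => ->; rewrite mxE.
have nD' : ~ D (y + t *: p) by move/HDd => [_ /(_ _ IfD) /eqP]; rewrite (negbTE H2).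
have LBz : LB (y + t *: p) j.
  move=> n Hn.
  have : rep X p (n + r).
    have -> : p = t^-1 *: (y + t *: p) + (- t^-1) *: y.
      by rewrite scalerDr scalerA mulVf // scale1r scaleNr addrAC subrr add0r.
    by apply: rep_add; apply: rep_scale.
  move/(rank_LB Hp); lia.
apply: (walk HC HfC HDd Hrk HD Hgen gj (xs := xs) (z := y + t *: p)) => //.
- exact: step_lb Hrk HD LBz z'nz nD'.
- by exists c; rewrite addrAC.
Qed.
End P2.

Section P1.
Variable F : closedFieldType.
Variable N : nat.
Implicit Types (u v w x z : vec F N) (S E : pset F N).

Definition trans a (p : vec F N) : (N.+1).-tuple {mpoly F[N.+1]} :=
  [tuple ((a * p ord0 i)%:MP + 'X_i) | i < N.+1].

Definition gK f a p := mmeasure mdeg (f \mPo trans a p).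

Lemma expand f a p q lam :
  f.@[coords (a *: p + lam *: q)] =
  \sum_(d < gK f a p) lam ^+ d * (pihomog mdeg d (f \mPo trans a p)).@[coords q].
Proof.
have -> : f.@[coords (a *: p + lam *: q)] = (f \mPo trans a p).@[coords (lam *: q)].
  rewrite comp_mpoly_meval; apply: meval_eq => i.
  by rewrite /trans tnth_mktuple mevalD mevalC mevalXU /coords !mxE.
rewrite {1}(pihomog_partitionE (leqnn (gK f a p))) /gK.
rewrite raddf_sum /=; apply: eq_bigr => d _.
by rewrite (homog_scale _ _ (pihomogP _ _ _)).
Qed.



Lemma homog0 E (IE : {mpoly F[N.+1]} -> Prop) f p
  (HE : forall v, E v <-> (v != 0 /\ forall f, IE f -> f.@[coords v] = 0))
  (HIE : forall f, IE f -> homogeneous f) (Ep : E p) (If : IE f) :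
  f.@[coords 0] = 0.
Proof.
have [d hd] := HIE f If.
rewrite -(scale0r p) (homog_scale _ _ hd).
by have [_ ->] := (HE p).1 Ep; rewrite ?mulr0.
Qed.

Lemma join_cont E (IE : {mpoly F[N.+1]} -> Prop) S p a q b
  (HE : forall v, E v <-> (v != 0 /\ forall f, IE f -> f.@[coords v] = 0))
  (HIE : forall f, IE f -> homogeneous f) (Ep : E p)
  (HS : forall q, S q -> forall lam, a *: p + lam *: q != 0 -> E (a *: p + lam *: q))
  (Snz : forall q, S q -> q != 0)
  (Hq : zclosure S q) : a *: p + b *: q != 0 -> E (a *: p + b *: q).
Proof.
move=> nz.
pose T := fun q' : vec F N => q' != 0 /\ forall f (d : 'I_(gK f a p)), IE f ->
  (pihomog mdeg d (f \mPo trans a p)).@[coords q'] = 0.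
have cT : zclosed T.
  exists (fun h => exists f (d : 'I_(gK f a p)), IE f /\ h = pihomog mdeg d (f \mPo trans a p)).
  split.
    by move=> h [f [d [_ ->]]]; exists (nat_of_ord d); apply: pihomogP.
  move=> v; split=> [[vnz Hv]|[vnz Hv]]; split=> //.
    by move=> h [f [d [If ->]]]; apply: Hv.
  by move=> f d If; apply: Hv; exists f, d.
have ST : forall q', S q' -> T q'.
  move=> q' Sq'; split; first exact: Snz.
  move=> f d If.
  pose P : {poly F} := \poly_(i < gK f a p) (pihomog mdeg i (f \mPo trans a p)).@[coords q'].
  have P0 : P = 0.
    apply: NNPP => /eqP /nonroot [lam]; apply/negP; rewrite negbK.
    rewrite horner_poly.
    have <- : f.@[coords (a *: p + lam *: q')] = \sum_(i < gK f a p) (pihomog mdeg i (f \mPo trans a p)).@[coords q'] * lam ^+ i.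
      by rewrite expand; apply: eq_bigr => i _; rewrite mulrC.
    apply/eqP; case: (eqVneq (a *: p + lam *: q') 0) => [->|nz'].
      exact: homog0 HE HIE Ep If.
    by have [_ ->] := (HE _).1 (HS _ Sq' _ nz').
  have := congr1 (fun P : {poly F} => P`_d) P0.
  by rewrite coef_poly ltn_ord coef0.
have [_ HT] := Hq T cT ST.
apply/HE; split=> // f If; rewrite expand big1 // => d _.
by rewrite HT ?mulr0.
Qed.

End P1.

Section Final.
Variable F : closedFieldType.
Variable N : nat.
Variable X : pset F N.
Implicit Types (u v w x z : vec F N) (S E : pset F N).

Lemma proj_eq_trans u v w : proj_eq u v -> proj_eq v w -> proj_eq u w.
Proof.
case=> c [c0 ->] [d [d0 ->]]; exists (c * d); split; first by rewrite mulf_neq0.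
by rewrite scalerA.
Qed.

Lemma scale_closed E v c : zclosed E -> E v -> c != 0 -> E (c *: v).
Proof.
case=> I [HI HE] /HE [vnz Hv] c0; apply/HE; split; first by rewrite scaler_eq0 negb_or c0.
move=> f If; have [d hd] := HI f If; by rewrite (homog_scale _ _ hd) Hv ?mulr0.
Qed.

Lemma rep_0 v : rep X v 0 -> v = 0.
Proof. by case=> xs [c [_ ->]]; rewrite big_ord0. Qed.

Lemma rep_S v n : rep X v n.+1 -> exists c x w, [/\ X x, rep X w n & v = c *: x + w].
Proof.
case=> xs [c [Hx ->]]; rewrite big_ord_recl.
exists (c ord0), (xs ord0), (\sum_(i < n) c (lift ord0 i) *: xs (lift ord0 i)); split=> //.
by exists (fun i => xs (lift ord0 i)), (fun i => c (lift ord0 i)).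
Qed.

Lemma exists_rank v n : rank_le X v n -> exists r, (r <= n)%N /\ rank_eq X v r.
Proof.
elim: n {-2}n (leqnn n) => [|n IH] n' Hn' Hv.
  by exists n'; split=> //; split=> // r; rewrite leqn0 in Hn'; rewrite (eqP Hn').
case: (classic (exists r, (r < n')%N /\ rank_le X v r)) => [[r [rn Hr]]|Hno].
  have rn' : (r <= n)%N by lia.
  have [r' [r'r Hr']] := IH r rn' Hr; exists r'; split=> //; lia.
exists n'; split=> //; split=> // r rn Hr; apply: Hno; by exists r; split.
Qed.

Lemma zclosure_ext S S' v : (forall u, S u <-> S' u) -> zclosure S v <-> zclosure S' v.
Proof.
move=> H; split=> Hv C cC SC; apply: Hv => // u /H; exact: SC.
Qed.

Definition Qk k := fun v : vec F N => v != 0 /\ exists n, (n <= k)%N /\ rep X v n.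

Lemma Sk_Qk k v : (v != 0 /\ exists r, (r <= k)%N /\ rank_eq X v r) <-> Qk k v.
Proof.
split=> [[vnz [r [rk [Hr _]]]]|[vnz [n [nk /merge [r [rn Hr]]]]]].
  by split=> //; exists r; split=> //; apply: rank_le_rep.
have [r' [r'r Hr']] := exists_rank Hr; split=> //; exists r'; split=> //; lia.
Qed.

Lemma kjoin_eq (cX : zclosed X) x1 x2 (X1 : X x1) (X2 : X x2) (n12 : ~ proj_eq x1 x2) k :
  (1 <= k)%N -> forall v, kjoin X k v <-> zclosure (Qk k) v.
Proof.
have other : forall v, v != 0 -> exists x, X x /\ ~ proj_eq v x.
  move=> v vnz; case: (classic (proj_eq v x1)) => H1; last by exists x1.
  case: (classic (proj_eq v x2)) => H2; last by exists x2.
  by exfalso; apply: n12; apply: proj_eq_trans (proj_eq_sym H1) H2.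
have XQ : forall k x, (1 <= k)%N -> X x -> Qk k x.
  move=> k' x k1 Xx; split; first exact: closed_nz cX Xx.
  by exists 1%N; split=> //; rewrite -[x]scale1r; apply: rep1.
elim: k => [//|k IH] _.
case: k IH => [_|k IH] v.
  split=> [Xv|Hv]; first by apply: zclosure_sub; apply: XQ.
  apply: Hv => // u [unz [n [n1 Hu]]].
  case: n n1 Hu => [_ /rep_0 u0|[|//] _ /rep_S [c [x [w [Xx /rep_0 w0 uE]]]]].
    by rewrite u0 eqxx in unz.
  rewrite uE w0 addr0; apply: scale_closed => //; apply: contraNneq unz => c0.
  by rewrite uE w0 c0 addr0 scale0r.
have {}IH := IH erefl.
rewrite /=; split.
- move=> Hv E cE SE; apply: Hv => // u [unz [p [q [Xp Kq npq [a [b uE]]]]]].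
  rewrite uE in unz *.
  case: (cE) => IE [HIE HE].
  apply: (join_cont (S := Qk k.+1) HE HIE) => //.
  + by apply: SE; apply: XQ.
  + move=> q' [q'nz [n [nk Hq']]] lam nz; apply: SE; split=> //.
    exists (1 + n)%N; split; first lia.
    by apply: rep_add; [apply: rep1 | apply: rep_scale].
  + by move=> q' [].
  + exact/IH.
- move=> Hv E cE SE; apply: Hv => // u [unz [n [nk Hu]]]; apply: SE.
  case: n nk Hu => [_ /rep_0 u0|n nk /rep_S [c [x [w [Xx Hw uE]]]]].
    by rewrite u0 eqxx in unz.
  have inX : X u -> (fun v => v != 0 /\ exists p q, [/\ X p, kjoin X k.+1 q, ~ proj_eq p q &
                      exists a b : F, v = a *: p + b *: q]) u.
    move=> Xu; split=> //; have [x' [Xx' nux']] := other u unz.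
    exists u, x'; split=> //; first by apply/IH; apply: zclosure_sub; apply: XQ.
    by exists 1, 0; rewrite scale1r scale0r addr0.
  case: (eqVneq w 0) => [w0|wnz].
    apply: inX; move: unz; rewrite uE w0 addr0 => unz; apply: scale_closed => //.
    by apply: contraNneq unz => ->; rewrite scale0r.
  case: (classic (proj_eq x w)) => [[e [e0 xe]]|nxw].
    apply: inX.
    have -> : u = (c + e^-1) *: x by rewrite uE xe scalerDl (scalerA e^-1) mulVf // scale1r.
    apply: scale_closed => //; apply: contraNneq unz => ce.
    by rewrite uE xe scalerA -{2}[w]scale1r -scalerDl -[1](mulVf e0) -mulrDl ce mul0r scale0r.
  split=> //; exists x, w; split=> //.
    by apply/IH; apply: zclosure_sub; split=> //; exists n; split.
  by exists c, 1; rewrite scale1r.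
Qed.

End Final.

Unset Implicit Arguments.
Set Strict Implicit.

Theorem corollary3p3 (F : closedFieldType) (hchar : [pchar F] =i pred0)
    (N : nat) (X : pset F N) (g m : nat) :
  irreducible_variety X -> nondegenerate_var X ->
  generic_rank X g -> max_rank X m ->
  forall k : nat, (1 <= k)%N -> (k <= m - g)%N ->
    (forall v, secant X k v <-> kjoin X k v) /\
    (forall v, secant X k v -> W X (m - k) v).
Proof.
move=> [cX _ _] _ [C [[IC [HICh HC]] [v0 [v0nz nCv0]] Hgen]] [Hmax [p [pnz Hp]]] k k1 km.
have Hrk : forall v, v != 0 -> exists r, rank_eq X v r.
  by move=> v /Hmax [r [_ Hr]]; exists r.
have [fC [IfC HfC]] := not_closed_wit HC v0nz nCv0.
have Rv0 : rep X v0 g by apply: rank_le_rep; case: (Hgen _ v0nz nCv0).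
have g1 : (1 <= g)%N.
  case: g Rv0 {Hgen km} => [|//] /rep_0 v00; by rewrite v00 eqxx in v0nz.
split.
- have m2 : (2 <= m)%N by lia.
  case: Hp => [[xs [Hx Hd _]] _].
  have o0 : (0 < m)%N by lia.
  have o1 : (1 < m)%N by lia.
  have := Hd (Ordinal o0) (Ordinal o1) isT => n12.
  move=> v; apply: iff_trans (iff_sym (kjoin_eq cX (Hx _) (Hx _) n12 k1 v)).
  by apply: zclosure_ext => u; apply: Sk_Qk.
- move=> v Hv; apply: Hv.
    apply: zclosure_closed => u []; done.
  move=> y [ynz [r [rk Hr]]] D [ID [HIDh HDd]] SD.
  apply: (small_in_D HC IfC HDd Hrk (j := m - k) (r := r) _ _ _ Hp HfC Rv0 ynz) => //.
  all: try lia.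
  all: try (by move=> u unz Hu; apply: SD).
  all: try (by apply: rank_le_rep; case: Hr).
Qed.
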